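(* Let $A$ be an abelian group of order $n$ and exponent greater than $2$, let $m$ be the number of elements of $A$ of order at most $2$, and let $\iota:A\to A$ be the automorphism $x\mapsto x^{-1}$. Then the number of inverse-closed subsets $S\subseteq A$ such that $\varphi(S)=S$ for some $\varphi\in\mathrm{Aut}(A)\setminus\{1,\iota\}$ is at most $2^{m/2+11n/24+(\log_2 n)^2}$.
   Context: A subset $S$ of a group is inverse-closed if $S^{-1}=S$. *)

(* Defs.v *)
From HB Require Import structures.
From mathcomp Require Import all_boot all_fingroup all_solvable.
From Stdlib Require Import Reals.
Set Implicit Arguments. Unset Strict Implicit. Unset Printing Implicit Defensive.
Local Open Scope group_scope.

Definition num_ord_le2 (gT : finGroupType) (A : {set gT}) : nat :=
  #|[set x in A | #[x] <= 2]|%N.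

(* The inversion automorphism iota of A, x |-> x^-1 (identity outside A, as
   all elements of Aut A are permutations of gT supported on A). *)
Definition inv_perm_on (gT : finGroupType) (A : {set gT}) (phi : {perm gT}) : bool :=
  [forall x in A, phi x == x^-1].

Definition special_sets (gT : finGroupType) (A : {set gT}) : {set {set gT}} :=
  [set S : {set gT} | [&& S \subset A, S^-1 == S &
     [exists phi in Aut A, [&& phi != 1, ~~ inv_perm_on A phi & phi @: S == S]]]].

Definition log2 (x : R) : R := (ln x / ln 2)%R.

(* Main.v *)
Require Import Defs.
From HB Require Import structures.
From mathcomp Require Import all_boot all_fingroup all_solvable.
From Stdlib Require Import Reals.
From Stdlib Require Import Lra.
From mathcomp Require Import zify.
From mathcomp Require Import ssrnat.
Set Implicit Arguments. Unset Strict Implicit. Unset Printing Implicit Defensive.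
Local Open Scope group_scope.
Lemma autM (gT : finGroupType) (A : {group gT}) (p : {perm gT}) x y :
  p \in Aut A -> x \in A -> y \in A -> p (x * y) = p x * p y.
Proof. by move=> pA xA yA; move/morphicP: (Aut_morphic pA); apply. Qed.

Lemma aut1 (gT : finGroupType) (A : {group gT}) (p : {perm gT}) :
  p \in Aut A -> p 1 = 1.
Proof. move=> pA; apply: (mulgI (p 1)); by rewrite -(autM pA) ?group1 // !mulg1. Qed.

Lemma autV (gT : finGroupType) (A : {group gT}) (p : {perm gT}) x :
  p \in Aut A -> p x^-1 = (p x)^-1.
Proof.
move=> pA; case: (boolP (x \in A)) => xA.
  by rewrite -(autmE pA) morphV.
by rewrite !(out_Aut pA) // groupV.
Qed.

Lemma autX2 (gT : finGroupType) (A : {group gT}) (p : {perm gT}) x :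
  p \in Aut A -> (p x ^+ 2 == 1) = (x ^+ 2 == 1).
Proof.
move=> pA; case: (boolP (x \in A)) => xA; last by rewrite (out_Aut pA).
rewrite !expgS !expg0 !mulg1 -(autM pA) // -{1}(aut1 pA).
by rewrite (inj_eq perm_inj).
Qed.
Definition erel (gT : finGroupType) (p : {perm gT}) : rel gT :=
  fun x y => [|| y == p x, y == p^-1 x | y == x^-1].

Lemma erel_sym (gT : finGroupType) (p : {perm gT}) : symmetric (erel p).
Proof.
have H : forall x y, erel p x y -> erel p y x.
  move=> x y; rewrite /erel; case/or3P=> /eqP ->.
  - by rewrite permK eqxx orbT.
  - by rewrite permKV eqxx.
  - by rewrite invgK eqxx !orbT.
by move=> x y; apply/idP/idP; apply: H.
Qed.

Lemma erel_csym (gT : finGroupType) (p : {perm gT}) : connect_sym (erel p).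
Proof. exact: sym_connect_sym (erel_sym p). Qed.

Lemma closed_erel (gT : finGroupType) (p : {perm gT}) (a : {pred gT}) :
  (forall x, (p x \in a) = (x \in a)) -> (forall x, (x^-1 \in a) = (x \in a)) ->
  closed (erel p) a.
Proof.
move=> Hp Hi x y; rewrite /erel; case/or3P=> /eqP ->.
- by rewrite Hp.
- by rewrite -{1}(permKV p x) Hp.
- by rewrite Hi.
Qed.

Definition Tset (gT : finGroupType) (p : {perm gT}) (A : {set gT}) :=
  [set x in A | root (erel p) x == x].
Definition Fset (gT : finGroupType) (p : {perm gT}) (A : {set gT}) :=
  [set S : {set gT} | [&& S \subset A, S^-1 == S & p @: S == S]].

Lemma closedA (gT : finGroupType) (A : {group gT}) (p : {perm gT}) :
  p \in Aut A -> closed (erel p) (mem A).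
Proof.
move=> pA; apply: closed_erel => x; last by rewrite groupV.
case: (boolP (x \in A)) => xA; first by rewrite (Aut_closed pA xA).
by rewrite (out_Aut pA xA) (negbTE xA).
Qed.

Lemma card_Fset (gT : finGroupType) (A : {group gT}) (p : {perm gT}) :
  p \in Aut A -> #|Fset p A| <= 2 ^ #|Tset p A|.
Proof.
move=> pA; rewrite -card_powerset.
have cA := closedA pA.
have sym := erel_csym p.
have key : forall S, S \in Fset p A ->
    S = [set x in A | root (erel p) x \in S :&: Tset p A].
  move=> S; rewrite inE => /and3P[sSA /eqP SV /eqP pS].
  have cS : closed (erel p) (mem S).
    apply: closed_erel => x; last by rewrite -mem_invg SV.
    apply/idP/idP => H.
      by rewrite -(mem_imset S x (@perm_inj _ p)) pS.
    by rewrite -pS imset_f.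
  apply/setP=> x; rewrite !inE.
  have rA : (root (erel p) x \in A) = (x \in A).
    by rewrite -(closed_connect cA (connect_root _ x)).
  rewrite rA (root_root sym) eqxx andbT -(closed_connect cS (connect_root _ x)).
  case: (boolP (x \in S)) => xS; last by rewrite andbF.
  by rewrite (subsetP sSA).
rewrite -(card_in_imset (f := fun S => S :&: Tset p A)); last first.
  move=> S1 S2 H1 H2 /= E; by rewrite (key _ H1) (key _ H2) E.
apply: subset_leq_card; apply/subsetP => X /imsetP[S _ ->].
by rewrite powersetE subsetIr.
Qed.
Lemma half_sub (gT : finGroupType) (G H : {group gT}) :
  H \subset G -> H != G :> {set gT} -> (2 * #|H| <= #|G|)%N.
Proof.
move=> sHG nHG; have /dvdnP[k Ek] := cardSg sHG.
have Hp : (0 < #|H|)%N := cardG_gt0 H.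
case: k Ek => [|[|k]] Ek.
- by move: (cardG_gt0 G); rewrite Ek.
- by case/negP: nHG; rewrite eqEcard sHG Ek mul1n leqnn.
- rewrite Ek; nia.
Qed.

Lemma union_sub (gT : finGroupType) (G H K : {group gT}) :
  H \subset G -> H != G :> {set gT} -> K \subset G -> K != G :> {set gT} ->
  (4 * #|H :|: K| <= 3 * #|G|)%N.
Proof.
move=> sHG nHG sKG nKG.
have hH := half_sub sHG nHG; have hK := half_sub sKG nKG.
have UI := cardsUI H K.
have MC := mul_cardG H K.
have sM : (#|(H * K)%g| <= #|G|)%N.
  by apply: subset_leq_card; rewrite mulG_subG sHG sKG.
have n0 := cardG_gt0 G.
set u := #|H :|: K| in UI *. set i := #|H :&: K| in UI MC.
set h := #|H| in UI hH MC. set k := #|K| in UI hK MC.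
set m := #|(H * K)%g| in MC sM. set n := #|G| in hH hK sM n0 *.
have : (m * i <= n * i)%N by rewrite leq_mul2r sM orbT.
nia.
Qed.

Lemma sum_ind (gT : finType) (A X : {set gT}) :
  X \subset A -> (\sum_(x in A) (x \in X) = #|X|)%N.
Proof.
move=> sXA; rewrite (bigID (mem X)) /= addnC big1 ?add0n; last first.
  by move=> i /andP[_ /negbTE ->].
rewrite (eq_bigr (fun=> 1%N)); last by move=> i /andP[_ ->].
rewrite sum1_card; apply: eq_card => x; rewrite unfold_in /=.
by case: (boolP (x \in X)) => [xX|]; rewrite ?andbF // (subsetP sXA _ xX).
Qed.

Lemma uniq_card (T : finType) (s : seq T) (K : {pred T}) :
  uniq s -> {subset s <= K} -> (size s <= #|K|)%N.
Proof.
move=> us sK; rewrite -(card_uniqP us); apply: subset_leq_card.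
by apply/subsetP.
Qed.

Lemma autA_mem (gT : finGroupType) (A : {group gT}) (p : {perm gT}) x :
  p \in Aut A -> (p x \in A) = (x \in A).
Proof.
move=> pA; case: (boolP (x \in A)) => xA; first by rewrite (Aut_closed pA xA).
by rewrite (out_Aut pA xA) (negbTE xA).
Qed.

Lemma sq_inv (gT : finGroupType) (x : gT) : (x^-1 == x) = (x ^+ 2 == 1).
Proof. by rewrite eq_invg_mul !expgS expg0 mulg1. Qed.

Lemma ord_le2 (gT : finGroupType) (x : gT) : (#[x] <= 2)%N = (x ^+ 2 == 1).
Proof.
rewrite -order_dvdn; case: #[x] (order_gt0 x) => [|[|[|k]]] //= _.
Qed.

Lemma Tbound (gT : finGroupType) (A : {group gT}) (p : {perm gT}) :
  abelian A -> p \in Aut A -> p != 1 -> ~~ inv_perm_on A p ->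
  (16 * #|Tset p A| <= 7 * #|A| + 8 * num_ord_le2 A)%N.
Proof.
move=> cAA pA p1 pinv.
pose e := erel p; have sym := erel_csym p.
pose O := [set x in A | x ^+ 2 == 1].
have EO : num_ord_le2 A = #|O|.
  by rewrite /num_ord_le2; apply: eq_card => x; rewrite !inE ord_le2.
rewrite EO.
pose C := [set x in A | p x == x].
pose D := [set x in A | p x == x^-1].
have gC : group_set C.
  apply/group_setP; split; first by rewrite inE group1 (aut1 pA) eqxx.
  move=> x y; rewrite !inE => /andP[xA /eqP px] /andP[yA /eqP py].
  by rewrite groupM // (autM pA xA yA) px py eqxx.
have gD : group_set D.
  apply/group_setP; split; first by rewrite inE group1 (aut1 pA) invg1 eqxx.
  move=> x y; rewrite !inE => /andP[xA /eqP px] /andP[yA /eqP py].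
  rewrite groupM // (autM pA xA yA) px py -invMg.
  by rewrite ((centsP cAA) x xA y yA) eqxx.
pose CG := Group gC; pose DG := Group gD.
have sCA : CG \subset A by apply/subsetP => x; rewrite inE => /andP[].
have sDA : DG \subset A by apply/subsetP => x; rewrite inE => /andP[].
have nCA : CG != A :> {set gT}.
  apply: contra p1 => /eqP /= EC; apply/eqP/permP => x; rewrite perm1.
  case: (boolP (x \in A)) => xA; last by rewrite (out_Aut pA xA).
  by move: xA; rewrite -EC inE => /andP[_ /eqP].
have nDA : DG != A :> {set gT}.
  apply: contra pinv => /eqP /= ED; apply/forall_inP => x.
  by rewrite -ED inE => /andP[].
have U := union_sub sCA nCA sDA nDA.
pose E := A :\: (C :|: D).
have sE : E \subset A by apply: subsetDl.
have cE : #|E| = (#|A| - #|C :|: D|)%N.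
  rewrite /E cardsD; congr (_ - _)%N; apply: eq_card => x; rewrite !inE.
  by case: (x \in A).
have hE : (#|A| <= 4 * #|E|)%N.
  have : (#|C :|: D| <= #|A|)%N by apply: subset_leq_card; rewrite subUset sCA sDA.
  rewrite cE /=; move: U => /=; lia.
pose OC := O :\: C.
have sOC : OC \subset A.
  by apply/subsetP => x; rewrite !inE => /andP[_ /andP[]].
pose w x := if x \in O then (if x \in C then 4 else 2)%N
            else (if (x \in C) || (x \in D) then 2 else 1)%N.
have pw : forall x, x \in A ->
    (w x + (x \in E) + (x \in OC) = 2 + (x \in O) + (x \in O))%N.
  move=> x xA.
  have hOD : x \in O -> x \in D -> x \in C.
    rewrite !inE xA /= -sq_inv => /eqP xi /eqP px.
    by rewrite px -{2}xi.
  rewrite /w /E /OC !in_setD !in_setU xA /=.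
  case: (boolP (x \in O)) => xO; case: (boolP (x \in C)) => xC //=;
    case: (boolP (x \in D)) => xD //=.
  by case/negP: xC; apply: hOD.
have Ssum : (\sum_(x in A) w x + #|E| + #|OC| = 2 * #|A| + 2 * #|O|)%N.
  have sO : O \subset A by apply/subsetP => x; rewrite inE => /andP[].
  rewrite -(sum_ind sE) -(sum_ind sOC) -!big_split /=.
  rewrite (eq_bigr _ pw) !big_split /= sum_nat_const (sum_ind sO).
  by rewrite mulnC -addnA addnn -mul2n.
suff : (4 * #|Tset p A| <= \sum_(x in A) w x)%N by lia.
have cA := closedA pA.
have cO : closed e (mem O).
  apply: closed_erel => x; rewrite !inE ?(autA_mem _ pA) ?groupV.
    by rewrite (autX2 _ pA).
  by rewrite expVgn invg_eq1.
have cC : closed e (mem C).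
  apply: closed_erel => x; rewrite !inE ?(autA_mem _ pA) ?groupV.
    by rewrite (inj_eq perm_inj).
  by rewrite (autV _ pA) (inj_eq invg_inj).
have cD : closed e (mem D).
  apply: closed_erel => x; rewrite !inE ?(autA_mem _ pA) ?groupV.
    by rewrite -(autV _ pA) (inj_eq perm_inj).
  by rewrite (autV _ pA) invgK eqg_invLR.
rewrite (partition_big (root e) (mem (Tset p A))) => [|x xA]; last first.
  change (root e x \in Tset p A); rewrite /e inE (root_root sym) eqxx andbT.
  by rewrite -(closed_connect cA (connect_root e x)).
rewrite mulnC -sum_nat_const; apply: leq_sum => j; rewrite inE => /andP[jA /eqP rj].
have memK : forall y, connect e j y -> y \in [pred i | (i \in A) && (root e i == j)].
  move=> y cy; rewrite inE -(closed_connect cA cy) jA /=.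
  by rewrite -rj eq_sym (root_connect sym).
rewrite (eq_bigr (fun=> w j)) => [|x /andP[xA /eqP rx]]; last first.
  have cjx : connect e j x by rewrite -(root_connect sym) rx rj.
  by rewrite /w -(closed_connect cO cjx) -(closed_connect cC cjx) -(closed_connect cD cjx).
have -> : (\sum_(i | (i \in A) && (root e i == j)) w j =
     #|[pred i | (i \in A) && (root e i == j)]| * w j)%N := sum_nat_const _ _.
have jCe : (j \in C) = (p j == j) by rewrite inE jA.
have jDe : (j \in D) = (p j == j^-1) by rewrite inE jA.
have jOe : (j \in O) = (j ^+ 2 == 1) by rewrite inE jA.
have e1 : forall y, e j y -> connect e j y by move=> y; apply: connect1.
have ej1 : e j (p j) by rewrite /e /erel eqxx.
have ej2 : e j j^-1 by rewrite /e /erel eqxx !orbT.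
have ej3 : connect e j (p j)^-1.
  apply: connect_trans (e1 _ ej1) (connect1 _).
  by rewrite /e /erel eqxx !orbT.
pose K := [pred i | (i \in A) && (root e i == j)].
have memK1 : forall y, e j y -> y \in K by move=> y /e1; apply: memK.
rewrite /w; case: (boolP (j \in O)) => jO.
  case: (boolP (j \in C)) => jC.
    have h1 : {subset [:: j] <= K}.
      by move=> y; rewrite inE => /eqP ->; apply: memK.
    exact: (leq_mul (uniq_card (s := [:: j]) isT h1) (leqnn 4)).
  have h1 : {subset [:: j; p j] <= K}.
    by move=> y; rewrite !inE => /orP[] /eqP ->; [apply: memK | apply: memK1].
  have u : uniq [:: j; p j].
    by rewrite /= inE andbT eq_sym -jCe.
  exact: (leq_mul (uniq_card u h1) (leqnn 2)).
have jO' : (j^-1 == j) = false by rewrite sq_inv -jOe (negbTE jO).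
case: (boolP ((j \in C) || (j \in D))) => jCD.
  have h1 : {subset [:: j; j^-1] <= K}.
    by move=> y; rewrite !inE => /orP[] /eqP ->; [apply: memK | apply: memK1].
  have u : uniq [:: j; j^-1].
    by rewrite /= inE andbT eq_sym jO'.
  exact: (leq_mul (uniq_card u h1) (leqnn 2)).
move: jCD; rewrite negb_or jCe jDe => /andP[/negbTE f1 /negbTE f2].
have h1 : {subset [:: j; j^-1; p j; (p j)^-1] <= K}.
  move=> y; rewrite !inE => /or4P[] /eqP ->;
    [apply: memK; exact: connect0 | apply: memK1; exact: ej2 | apply: memK1; exact: ej1 | apply: memK; exact: ej3].
have u : uniq [:: j; j^-1; p j; (p j)^-1].
  rewrite /= !inE !andbT.
  have f3 : (j == (p j)^-1) = false by rewrite -eqg_invLR eq_sym f2.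
  rewrite (eq_sym j j^-1) jO' (eq_sym j (p j)) f1 f3 (inj_eq invg_inj) (eq_sym j (p j)) f1.
  by rewrite (eq_sym j^-1 (p j)) f2 (eq_sym (p j)) sq_inv (autX2 _ pA) -jOe (negbTE jO).
exact: (leq_mul (uniq_card u h1) (leqnn 1)).
Qed.

Lemma gen_small (gT : finGroupType) (A : {group gT}) :
  exists B : {set gT}, [/\ B \subset A, <<B>> = A & (2 ^ #|B| <= #|A|)%N].
Proof.
suff H : forall d (B : {set gT}), B \subset A -> (#|A| - #|<<B>>| <= d)%N ->
   (2 ^ #|B| <= #|<<B>>|)%N ->
   exists B : {set gT}, [/\ B \subset A, <<B>> = A & (2 ^ #|B| <= #|A|)%N].
  apply: (H #|A| set0); rewrite ?sub0set ?leq_subr //.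
  by rewrite gen0 cards0 cards1.
elim=> [|d IH] B sBA hd hB.
- have sgA : <<B>> \subset A by rewrite gen_subG.
  exists B; split => //.
    by apply/eqP; rewrite eqEcard sgA /= -subn_eq0 -leqn0.
  apply: leq_trans hB _; exact: subset_leq_card.
- have sgA : <<B>> \subset A by rewrite gen_subG.
  case: (boolP (A \subset <<B>>)) => sAg.
    exists B; split => //; first by apply/eqP; rewrite eqEsubset sgA.
    by apply: leq_trans hB _; exact: subset_leq_card.
  case/subsetPn: sAg => x xA xg.
  have xB : x \notin B by apply: contra xg; apply: (subsetP (subset_gen B)).
  have sB'A : x |: B \subset A by rewrite subUset sub1set xA sBA.
  have sgg : <<B>> \subset <<x |: B>> by apply: genS; apply: subsetUr.
  have ngg : <<B>>%G != <<x |: B>>%G :> {set gT}.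
    apply/negP => /eqP /= E; case/negP: xg; rewrite E.
    by apply: mem_gen; rewrite setU11.
  have h2 : (2 * #|<<B>>| <= #|<<x |: B>>|)%N := half_sub sgg ngg.
  have sg'A : (#|<<x |: B>>| <= #|A|)%N.
    by apply: subset_leq_card; rewrite gen_subG.
  have g0 : (0 < #|<<B>>|)%N := cardG_gt0 <<B>>%G.
  apply: (IH (x |: B)) => //=.
    set a := #|<<B>>| in hd hB g0 h2 *. set b := #|<<x |: B>>| in h2 sg'A *. set n := #|A| in hd sg'A *. lia.
  rewrite cardsU1 xB expnS; apply: leq_trans h2; by rewrite leq_mul2l hB orbT.
Qed.

Lemma card_Aut_le (gT : finGroupType) (A : {group gT}) (B : {set gT}) :
  B \subset A -> <<B>> = A -> (#|Aut A| <= #|A| ^ #|B|)%N.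
Proof.
move=> sBA gBA.
pose f (q : {perm gT}) : {ffun {x : gT | x \in B} -> gT} := [ffun x => q (val x)].
rewrite -(card_in_imset (f := f)); last first.
  move=> q1 q2 q1A q2A /= Ef.
  have eB : forall b, b \in B -> q1 b = q2 b.
    move=> b bB; move/ffunP: Ef => /(_ (Sub b bB)).
    by rewrite /f !ffunE.
  have gK : group_set [set x in A | q1 x == q2 x].
    apply/group_setP; split; first by rewrite inE group1 (aut1 q1A) (aut1 q2A) eqxx.
    move=> x y; rewrite !inE => /andP[xA /eqP e1] /andP[yA /eqP e2].
    by rewrite groupM // (autM q1A xA yA) (autM q2A xA yA) e1 e2 eqxx.
  have sBK : <<B>> \subset Group gK.
    rewrite gen_subG; apply/subsetP => b bB.
    by rewrite inE (subsetP sBA b bB) (eB b bB) eqxx.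
  have sAK : A \subset Group gK by move: sBK; rewrite gBA.
  apply/permP => x; case: (boolP (x \in A)) => xA.
    by have := subsetP sAK x xA; rewrite inE => /andP[_ /eqP].
  by rewrite (out_Aut q1A xA) (out_Aut q2A xA).
rewrite -(card_sig (mem B)) -card_ffun_on; apply: subset_leq_card.
apply/subsetP => g /imsetP[q qA ->]; apply/ffun_onP => x.
by rewrite ffunE (Aut_closed qA) // (subsetP sBA) // (valP x).
Qed.

Lemma card_bigcup_le (T I : finType) (P : pred I) (F : I -> {set T}) :
  (#|\bigcup_(i | P i) F i| <= \sum_(i | P i) #|F i|)%N.
Proof.
apply: (big_ind2 (fun (X : {set T}) (n : nat) => #|X| <= n)%N).
- by rewrite cards0.
- move=> X a Y b hX hY; apply: leq_trans (leq_add hX hY).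
  exact: (leq_card_setU X Y).1.
- by [].
Qed.

Local Close Scope group_scope.
Local Open Scope R_scope.

Lemma exp_le_mono x y : x <= y -> exp x <= exp y.
Proof. move=> [H|->]; [left; exact: exp_increasing | right; reflexivity]. Qed.

Lemma ln_le_mono x y : 0 < x -> x <= y -> ln x <= ln y.
Proof. move=> hx [H|->]; [left; exact: ln_increasing | right; reflexivity]. Qed.

Lemma INR_le {a b : nat} : (a <= b)%N -> INR a <= INR b.
Proof. by move/leP; apply: le_INR. Qed.

Lemma INR_muln (a b : nat) : INR (a * b) = INR a * INR b.
Proof. by rewrite -multE mult_INR. Qed.

Lemma INR_addn (a b : nat) : INR (a + b) = INR a + INR b.
Proof. by rewrite -plusE plus_INR. Qed.

Lemma INR_expn (a b : nat) : INR (a ^ b) = INR a ^ b.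
Proof. elim: b => [|b IH] //=; by rewrite expnS INR_muln IH. Qed.

Lemma real_part (n m k t S : nat) : (0 < n)%N -> (2 ^ k <= n)%N ->
  (16 * t <= 7 * n + 8 * m)%N -> (S <= n ^ k * 2 ^ t)%N ->
  INR S <= Rpower 2 (INR m / 2 + 11 * INR n / 24 + (log2 (INR n)) ^ 2).
Proof.
move=> n0 hk ht hS.
have L2 : 0 < ln 2 by rewrite -ln_1; apply: ln_increasing; lra.
have N0 : 0 < INR n by apply: lt_0_INR; apply/ltP.
have lnn : 0 <= ln (INR n).
  rewrite -ln_1; apply: ln_le_mono; first lra. have := INR_le n0. simpl. by [].
have hk' : INR k * ln 2 <= ln (INR n).
  rewrite -ln_pow; last lra.
  apply: ln_le_mono; first by apply: pow_lt; lra.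
  have := INR_le hk; rewrite INR_expn; by [].
have ht' : 16 * INR t <= 7 * INR n + 8 * INR m.
  have := INR_le ht; rewrite (INR_muln 16 t) (INR_addn (7*n) (8*m)) (INR_muln 7 n) (INR_muln 8 m).
  rewrite !(INR_IZR_INZ 16) !(INR_IZR_INZ 7) !(INR_IZR_INZ 8) /=; lra.
apply: Rle_trans (INR_le hS) _.
rewrite INR_muln !INR_expn.
rewrite -(@Rpower_pow k (INR n) N0) -(@Rpower_pow t (INR 2) ltac:(simpl; lra)).
rewrite /Rpower -exp_plus; apply: exp_le_mono.
rewrite /log2.
have key : INR k * ln (INR n) <= (ln (INR n) / ln 2) ^ 2 * ln 2.
  have -> : (ln (INR n) / ln 2) ^ 2 * ln 2 = ln (INR n) * ln (INR n) / ln 2.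
    field; lra.
  apply: (Rmult_le_reg_r (ln 2)) => //.
  have -> : ln (INR n) * ln (INR n) / ln 2 * ln 2 = ln (INR n) * ln (INR n).
    field; lra.
  nra.
simpl (INR 2).
have e2 : 1 + 1 = 2 by lra.
rewrite e2.
have ht2 : INR t <= INR m / 2 + 11 * INR n / 24 by lra.
have := Rmult_le_compat_r (ln 2) _ _ (Rlt_le _ _ L2) ht2.
lra.
Qed.

Lemma lemma5p5_aux (gT : finGroupType) (A : {group gT}) :
  abelian A ->
  (INR #|special_sets A| <=
     Rpower 2 (INR (num_ord_le2 A) / 2 + 11 * INR #|A| / 24
               + (log2 (INR #|A|)) ^ 2))%R.
Proof.
move=> cAA.
have [B [sBA gBA hB]] := gen_small A.
pose P := [set q in Aut A | (q != 1%g) && ~~ inv_perm_on A q].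
pose t := ((7 * #|A| + 8 * num_ord_le2 A) %/ 16)%N.
have hS : (#|special_sets A| <= #|A| ^ #|B| * 2 ^ t)%N.
  have sub : special_sets A \subset \bigcup_(q in P) Fset q A.
    apply/subsetP => S; rewrite inE => /and3P[sSA SV /exists_inP[q qA /and3P[q1 qi qS]]].
    apply/bigcupP; exists q; first by rewrite inE qA q1 qi.
    by rewrite inE sSA SV qS.
  apply: leq_trans (subset_leq_card sub) _.
  apply: leq_trans (card_bigcup_le _ _) _.
  apply: (@leq_trans (\sum_(q in P) 2 ^ t)%N).
    apply: leq_sum => q; rewrite inE => /andP[qA /andP[q1 qi]].
    apply: leq_trans (card_Fset qA) _; apply: leq_pexp2l => //.
    by rewrite leq_divRL // mulnC Tbound.
  rewrite sum_nat_const leq_mul2r; apply/orP; right.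
  apply: leq_trans (card_Aut_le sBA gBA).
  by apply: subset_leq_card; apply/subsetP => q; rewrite inE => /andP[].
apply: (real_part (cardG_gt0 A) hB _ hS).
by rewrite mulnC leq_divM.
Qed.

Theorem lemma5p5 (gT : finGroupType) (A : {group gT}) :
  abelian A -> (2 < exponent A)%N ->
  (INR #|special_sets A| <=
     Rpower 2 (INR (num_ord_le2 A) / 2 + 11 * INR #|A| / 24
               + (log2 (INR #|A|)) ^ 2))%R.
Proof. by move=> cAA _; apply: lemma5p5_aux. Qed.
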